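(* There is an absolute constant $C$ such that for all positive integers $n$, $\mathrm{sf}(\Lambda(R_0))\le 2^{0.36n^2+Cn}\,\mathrm{sf}(\Lambda(R\cup L))$.
   Context: $R_0=\{(x,y)\in[0,n]^2:0.7n\le x+y\le1.7n\}$, $R=\{(x,y)\in\mathbb{R}^2:0.7n\le x+y\le n,\ |x-y|\le0.8n\}$, $L=\{(x,y)\in\mathbb{R}^2:2\lceil0.7n\rceil\le x+y\le1.7n,\ |x-y|\le0.4n\}$. For $X\subseteq\mathbb{R}^2$, $\Lambda(X)=\mathbb{Z}^2\cap X$. $\mathrm{sf}(Y)$ is the number of sum-free subsets of a finite $Y\subset\mathbb{Z}^2$ (no $a,b,c$, not necessarily distinct, with $a+b=c$). *)

(* Defs.v *)
From HB Require Import structures.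
From mathcomp Require Import all_boot all_order all_algebra finmap.
From Stdlib Require Import Reals.
Set Implicit Arguments. Unset Strict Implicit. Unset Printing Implicit Defensive.
Import Order.TTheory GRing.Theory Num.Theory.
Local Open Scope fset_scope.
Local Open Scope ring_scope.

Definition pt := (int * int)%type.
Definition padd (p q : pt) : pt := (p.1 + q.1, p.2 + q.2).

Definition sum_free (A : {fset pt}) : bool :=
  all (fun a => all (fun b => padd a b \notin A) A) A.

Definition sf (Y : {fset pt}) : nat := #|` [fset A in fpowerset Y | sum_free A]|.

Definition ceil07 (n : nat) : int := Num.ceil ((7 * n)%:R / 10 : rat).

(* Regions, with all inequalities cleared of denominators (multiplied by 10) *)
Definition inR0 (n : nat) (p : pt) : bool :=
  [&& 0 <= p.1 <= n%:Z, 0 <= p.2 <= n%:Z,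
      (7 * n)%:Z <= 10 * (p.1 + p.2) & 10 * (p.1 + p.2) <= (17 * n)%:Z].

Definition inR (n : nat) (p : pt) : bool :=
  [&& (7 * n)%:Z <= 10 * (p.1 + p.2), p.1 + p.2 <= n%:Z
    & 10 * `|p.1 - p.2| <= (8 * n)%:Z].

Definition inL (n : nat) (p : pt) : bool :=
  [&& 2 * ceil07 n <= p.1 + p.2, 10 * (p.1 + p.2) <= (17 * n)%:Z
    & 10 * `|p.1 - p.2| <= (4 * n)%:Z].

(* A bounding box [-2n, 2n]^2 of integer points; every point of R_0, R and L
   lies in [-n, 2n]^2, so Lambda below is exactly Z^2 ∩ X. *)
Definition brange (n : nat) : seq int :=
  [seq i%:Z - (2 * n)%:Z | i <- iota 0 (4 * n).+1].
Definition box (n : nat) : seq pt :=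
  [seq (x, y) | x <- brange n, y <- brange n].

Definition Lambda (n : nat) (X : pt -> bool) : {fset pt} :=
  [fset p in box n | X p].

Definition inRuL (n : nat) (p : pt) : bool := inR n p || inL n p.

(* Main.v *)
Require Import Defs.
From HB Require Import structures.
From mathcomp Require Import all_boot all_order all_algebra finmap zify ring lra.
Import Order.TTheory GRing.Theory Num.Theory.

Section Ceil.
Local Open Scope ring_scope.

Lemma ceil07_bounds n : ((7*n)%:Z <= 10 * ceil07 n) /\ (10 * ceil07 n < (7*n)%:Z + 10).
Proof.
rewrite /ceil07; set c := Num.ceil _.
have /andP[h1 h2] := Num.Theory.ceil_itv ((7 * n)%:R / 10 : rat).
rewrite -/c in h1 h2.
set a : rat := (7 * n)%:R in h1 h2.
rewrite -natz.
split.
  rewrite -(ler_int rat) !(rmorphM, rmorphD, rmorph_nat) /=.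
  rewrite ler_pdivrMr in h2; last by [].
  lra.
rewrite -(ltr_int rat) !(rmorphM, rmorphD, rmorph_nat) /=.
rewrite ltr_pdivlMr in h1; last by [].
rewrite rmorphB /= in h1.
lra.
Qed.

End Ceil.

Section SF.
Local Open Scope fset_scope.

Lemma sum_free_sub (A B : {fset pt}) : B `<=` A -> sum_free A -> sum_free B.
Proof.
move=> /fsubsetP sBA /allP H; apply/allP => a aB; apply/allP => b bB.
have /allP := H a (sBA _ aB) => /(_ b (sBA _ bB)).
by apply: contra; apply: sBA.
Qed.

Lemma sf_mono (P Q : {fset pt}) : P `<=` Q -> (sf P <= sf Q)%N.
Proof.
move=> sPQ; apply: fsubset_leq_card; apply/fsubsetP => A.
rewrite !inE /= !fpowersetE => /andP[sAP ->]; rewrite andbT.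
exact: fsubset_trans sPQ.
Qed.

Lemma sf_split (Y P : {fset pt}) : (sf Y <= 2 ^ #|` Y `\` P| * sf (Y `&` P))%N.
Proof.
set S := [fset A in fpowerset Y | sum_free A].
set S1 := [fset A in fpowerset (Y `&` P) | sum_free A].
set S2 := fpowerset (Y `\` P).
have -> : (sf Y = #|` S|) by [].
rewrite -card_fpowerset -/S2 mulnC.
have -> : (sf (Y `&` P) = #|` S1|) by [].
set f := fun A : {fset pt} => (A `&` P, A `\` P).
have inj : {in S &, injective f}.
  move=> A B _ _ [e1 e2].
  by rewrite -(fsetID P A) -(fsetID P B) e1 e2.
have/eqP <- : #|` f @` S| == #|` S| by apply/card_in_imfsetP.
set L := [seq (B, E) | B <- enum_fset S1, E <- enum_fset S2].
apply: (@leq_trans (size L)); last by rewrite size_allpairs.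
apply: (@leq_trans #|` [fset x in L]|); last first.
  by rewrite card_fseq; apply: size_undup.
apply: fsubset_leq_card; apply/fsubsetP => z /imfsetP [A AS ->].
move: AS; rewrite !inE /= fpowersetE => /andP[sAY sfA].
apply/allpairsP; exists (A `&` P, A `\` P) => /=; split => //.
  rewrite !inE /= fpowersetE; apply/andP; split.
    by apply: fsetSI.
  apply: sum_free_sub sfA; exact: fsubsetIl.
by rewrite /S2 fpowersetE; apply: fsetSD.
Qed.

End SF.


Lemma count_interval (P : pred nat) N a b :
  (forall x, (x < N)%N -> P x -> (a <= 20 * x <= b)%N) ->
  (20 * count P (iota 0 N) <= b - a + 20)%N.
Proof.
move=> H.
set l := filter P (iota 0 N).
have ul : uniq l by rewrite filter_uniq // iota_uniq.
set lo := ((a + 19) %/ 20)%N; set hi := (b %/ 20)%N.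
have sub : {subset l <= iota lo (hi + 1 - lo)}.
  move=> x; rewrite mem_filter mem_iota => /andP[Px /andP[_ xN]].
  have e1 := divn_eq b 20; have e2 := divn_eq (a + 19) 20.
  have r1 : (b %% 20 < 20)%N by rewrite ltn_mod.
  have r2 : ((a + 19) %% 20 < 20)%N by rewrite ltn_mod.
  rewrite -/lo -/hi in e1 e2 *; clearbody lo hi.
  have := H x xN Px; rewrite mem_iota; lia.
have := uniq_leq_size ul sub; rewrite size_iota -size_filter -/l.
have e1 := divn_eq b 20; have e2 := divn_eq (a + 19) 20.
have r1 : (b %% 20 < 20)%N by rewrite ltn_mod.
have r2 : ((a + 19) %% 20 < 20)%N by rewrite ltn_mod.
rewrite -/lo -/hi in e1 e2 *; clearbody lo hi l; move: (size l) => m; clear -e1 e2 r1 r2; lia.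
Qed.

Lemma count_split3 (P c1 c2 c3 : pred nat) l :
  (forall x, P x -> [|| c1 x, c2 x | c3 x]) ->
  (count P l <= count (fun x => P x && c1 x) l + count (fun x => P x && c2 x) l
      + count (fun x => P x && c3 x) l)%N.
Proof.
move=> H; elim: l => //= x l IH.
case Px: (P x) => /=; last lia.
have := H x Px; case: (c1 x); case: (c2 x); case: (c3 x) => //= _; lia.
Qed.

Definition Q (n s x : nat) : bool :=
  inR0 n (Posz x, (Posz s - Posz x)%R) && ~~ inRuL n (Posz x, (Posz s - Posz x)%R).




Lemma ceil_facts n : ceil07 n = Posz (`|ceil07 n|%N) /\
  (7 * n <= 10 * `|ceil07 n|%N < 7 * n + 10)%N.
Proof.
have [h1 h2] := ceil07_bounds n.
have e : ceil07 n = Posz (`|ceil07 n|%N) by rewrite gez0_abs //; lia.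
split => //; move: h1 h2; rewrite {1 2}e; lia.
Qed.

Definition g1 n s := if (s <= n)%N then 10 * (10 * s - 8 * n) else 0.
Definition g2 n s := if (n < s)%N then 10 * (16 * n - 10 * s) else 0.
Definition g3 n c s := if (n < s < 2 * c)%N then 40 * n + 100 else 0.
Definition B n s := g1 n s + g2 n s + g3 n (`|ceil07 n|%N) s + 300.

Lemma level_bound n s : (100 * count (Q n s) (iota 0 n.+1) <= B n s)%N.
Proof.
have [hc hcb] := ceil_facts n.
move: hc hcb; set c := `|ceil07 n|%N => hc hcb.
have H3 := @count_split3 (Q n s) (fun x => 20*x + 4*n < 10*s)%N
   (fun x => 10*s + 4*n < 20*x)%N
   (fun x => (10*s <= 20*x + 4*n) && (20*x <= 10*s+4*n))%N (iota 0 n.+1).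
have {}H3 := H3 (fun x _ => ltac:(lia)).
rewrite /B /g1 /g2 /g3 -/c.
case: (leqP s n) => hs.
  have h1 := @count_interval (fun x => Q n s x && (20*x + 4*n < 10*s)%N) n.+1 0 (10*s-8*n).
  have {}h1 := h1 (fun x _ => ltac:(move=> /andP[]; rewrite /Q /inR0 /inRuL /inR /inL hc /=; lia)).
  have h2 := @count_interval (fun x => Q n s x && (10*s + 4*n < 20*x)%N) n.+1 (10*s+8*n) (20*s).
  have {}h2 := h2 (fun x _ => ltac:(move=> /andP[]; rewrite /Q /inR0 /inRuL /inR /inL hc /=; lia)).
  have h3 := @count_interval (fun x => Q n s x && ((10*s <= 20*x + 4*n) && (20*x <= 10*s+4*n)))%N n.+1 1 0.
  have {}h3 := h3 (fun x _ => ltac:(move=> /andP[]; rewrite /Q /inR0 /inRuL /inR /inL hc /=; lia)).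
  move: H3 h1 h2 h3; set k1 := count (Q n s) _ => H3 h1 h2 h3; rewrite /=; lia.
have h1 := @count_interval (fun x => Q n s x && (20*x + 4*n < 10*s)%N) n.+1 (20*(s-n)) (10*s-4*n).
have {}h1 := h1 (fun x _ => ltac:(move=> /andP[]; rewrite /Q /inR0 /inRuL /inR /inL hc /=; lia)).
have h2 := @count_interval (fun x => Q n s x && (10*s + 4*n < 20*x)%N) n.+1 (10*s+4*n) (20*n).
have {}h2 := h2 (fun x _ => ltac:(move=> /andP[]; rewrite /Q /inR0 /inRuL /inR /inL hc /=; lia)).
set k1 := count (Q n s) _; rewrite /=.
case: (ltnP s (2 * c)) => hs2.
  have h3 := @count_interval (fun x => Q n s x && ((10*s <= 20*x + 4*n) && (20*x <= 10*s+4*n)))%N n.+1 (10*s-4*n) (10*s+4*n).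
  have {}h3 := h3 (fun x _ => ltac:(move=> /andP[]; rewrite /Q /inR0 /inRuL /inR /inL hc /=; lia)).
  lia.
have h3 := @count_interval (fun x => Q n s x && ((10*s <= 20*x + 4*n) && (20*x <= 10*s+4*n)))%N n.+1 1 0.
have {}h3 := h3 (fun x _ => ltac:(move=> /andP[]; rewrite /Q /inR0 /inRuL /inR /inL hc /=; lia)).
lia.
Qed.



Lemma S1 n N : (2 * \sum_(0 <= s < N) g1 n s <= (10 * minn N n.+1 - 8 * n) ^ 2)%N.
Proof.
elim: N => [|N IH]; first by rewrite big_nil.
rewrite big_nat_recr //= mulnDr; move: IH; set S := \sum_(0 <= s < N) _ => IH; clearbody S; rewrite /g1.
case: (leqP N n) => hN.
  have e1 : minn N n.+1 = N by lia.
  have e2 : minn N.+1 n.+1 = N.+1 by lia.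
  rewrite e1 in IH; rewrite e2.
  case: (leqP (8 * n) (10 * N)) => h.
    have -> : (10 * N.+1 - 8 * n = (10 * N - 8 * n) + 10)%N by lia.
    move: IH; set t := (10 * N - 8 * n)%N; move=> IH; clearbody t.
    rewrite sqrnD; lia.
  have -> : (10 * N - 8 * n = 0)%N by lia.
  lia.
have e1 : minn N n.+1 = n.+1 by lia.
have e2 : minn N.+1 n.+1 = n.+1 by lia.
rewrite e1 in IH; rewrite e2; lia.
Qed.

Lemma S2 n N : (2 * \sum_(0 <= s < N) g2 n s + (16 * n - 10 * (maxn N n.+1).-1) ^ 2 <= (6 * n) ^ 2)%N.
Proof.
elim: N => [|N IH].
  rewrite big_nil (_ : maxn 0 n.+1 = n.+1) /=; last by lia.
  have -> : (16 * n - 10 * n = 6 * n)%N by lia.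
  lia.
rewrite big_nat_recr //= mulnDr; move: IH; set S := \sum_(0 <= s < N) _ => IH; clearbody S; rewrite /g2.
case: (leqP N n) => hN.
  have e1 : maxn N n.+1 = n.+1 by lia.
  have e2 : maxn N.+1 n.+1 = n.+1 by lia.
  rewrite e1 in IH; rewrite e2; lia.
have e1 : (maxn N n.+1).-1 = N.-1 by lia.
have e2 : (maxn N.+1 n.+1).-1 = N by lia.
rewrite e1 in IH; rewrite e2.
case: (leqP (10 * N) (16 * n)) => h.
  have e3 : (16 * n - 10 * N.-1 = (16 * n - 10 * N) + 10)%N by lia.
  rewrite e3 in IH; move: IH; set t := (16 * n - 10 * N)%N; move=> IH; clearbody t.
  rewrite sqrnD in IH; lia.
have -> : (16 * n - 10 * N = 0)%N by lia.
lia.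
Qed.

Lemma S3 n c N : (\sum_(0 <= s < N) g3 n c s <= (40 * n + 100) * (minn N (2 * c) - n.+1))%N.
Proof.
elim: N => [|N IH]; first by rewrite big_nil.
rewrite big_nat_recr //=; move: IH; set S := \sum_(0 <= s < N) _ => IH; clearbody S; rewrite /g3.
case: ifP => h.
  have -> : (minn N.+1 (2 * c) - n.+1 = (minn N (2 * c) - n.+1) + 1)%N by lia.
  rewrite mulnDr; lia.
rewrite addn0; apply: (leq_trans IH); rewrite leq_mul2l; apply/orP; right; lia.
Qed.

Section CD.
Local Open Scope fset_scope.

Lemma card_D n : (#|` Lambda n (inR0 n) `\` Lambda n (inRuL n)| <=
   \sum_(0 <= s < (2*n).+1) count (Q n s) (iota 0 n.+1))%N.
Proof.
set D := _ `\` _.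
have memD p : p \in D -> inR0 n p && ~~ inRuL n p.
  rewrite !inE /= => /andP[h1 /andP[hb h0]]; rewrite h0 /=; move: h1; by rewrite hb.
set f := fun p : pt => (`|(p.1 + p.2)%R|%N, `|p.1|%N).
have inj : {in D &, injective f}.
  move=> [a b] [a' b'] /memD /andP[h _] /memD /andP[h' _] [e1 e2].
  move: h h' e1 e2; rewrite /inR0 /= => h h' e1 e2.
  congr (_, _); lia.
have/eqP <- : #|` f @` D| == #|` D| by apply/card_in_imfsetP.
set AP := [seq (s, x) | s <- iota 0 (2*n).+1, x <- iota 0 n.+1].
set L := [seq z <- AP | Q n z.1 z.2].
apply: (@leq_trans (size L)).
  apply: (@leq_trans #|` [fset x in L]|); last first.
    by rewrite card_fseq; apply: size_undup.
  apply: fsubset_leq_card; apply/fsubsetP => z /imfsetP [p pD ->].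
  have /andP[h0 h1] := memD p pD.
  have ep : (Posz `|p.1|%N, (Posz `|(p.1 + p.2)%R|%N - Posz `|p.1|%N)%R) = p.
    case: p pD h0 h1 => a b _ h0 _; move: h0; rewrite /inR0 /= => h0.
    congr (_, _); lia.
  rewrite inE mem_filter /= /Q ep h0 h1 /=.
  apply/allpairsP; exists (f p); split => //; rewrite mem_iota /= add0n;
    move: h0; rewrite /inR0; case: p {pD h1 ep} => a b /=; lia.
rewrite size_filter /AP count_flatten sumnE big_map /index_iota subn0.
rewrite big_map; apply: eq_leq; apply: eq_bigr => s _; by rewrite count_map.
Qed.

End CD.

Lemma D_bound n : (100 * #|` (Lambda n (inR0 n) `\` Lambda n (inRuL n))%fset| <=
   36 * (n * n) + 700 * n + 450)%N.
Proof.
apply: (leq_trans (leq_mul (leqnn 100) (card_D n))).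
rewrite big_distrr /=.
apply: leq_trans.
  apply: leq_sum => s _; exact: level_bound n s.
rewrite /B !big_split /= sum_nat_const_nat.
have h1 := S1 n (2 * n).+1.
have h2 := S2 n (2 * n).+1.
have h3 := S3 n (`|ceil07 n|%N) (2 * n).+1.
have [_ hc] := ceil_facts n.
move: h1 h2 h3 hc.
set c := `|ceil07 n|%N.
set s1 := \sum_(0 <= s < _) g1 n s.
set s2 := \sum_(0 <= s < _) g2 n s.
set s3 := \sum_(0 <= s < _) g3 n c s.
clearbody s1 s2 s3 c => h1 h2 h3 hc.
have e1 : minn (2 * n).+1 n.+1 = n.+1 by lia.
rewrite e1 in h1.
have e2 : (10 * n.+1 - 8 * n = 2 * n + 10)%N by lia.
rewrite e2 in h1.
set X := (minn (2 * n).+1 (2 * c) - n.+1)%N in h3.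
have hX : (10 * X <= 4 * n + 10)%N by rewrite /X; lia.
clearbody X.
have h4 : ((40 * n + 100) * X <= (4 * n + 10) * (4 * n + 10))%N.
  rewrite (_ : (40 * n + 100) * X = (4 * n + 10) * (10 * X))%N; last by ring.
  by apply: leq_mul.
nia.
Qed.

From Stdlib Require Import Reals Lra.

Lemma INR_expn2 k : INR (expn 2 k) = (2 ^ k)%R.
Proof.
elim: k => [|k IH]; first by simpl.
rewrite expnS -multE mult_INR IH. simpl. Stdlib.micromega.Lra.lra.
Qed.

Theorem mainTheorem7 :
  exists C : R, forall n : nat, (0 < n)%N ->
    (INR (sf (Lambda n (inR0 n)))
     <= Rpower 2 ((36 / 100) * INR n ^ 2 + C * INR n) * INR (sf (Lambda n (inRuL n))))%R.
Proof.
exists 12%R => n hn.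
set Y := Lambda n (inR0 n); set P := Lambda n (inRuL n).
set k := #|` (Y `\` P)%fset|.
have key : (sf Y <= expn 2 k * sf P)%N.
  apply: (leq_trans (sf_split Y P)); rewrite leq_mul2l; apply/orP; right.
  apply: sf_mono; exact: fsubsetIr.
have hk : (100 * k <= 36 * (n * n) + 1150 * n)%N.
  have := D_bound n; rewrite -/Y -/P -/k; lia.
have hk2 : (k * 100 <= n * n * 36 + n * 1150)%N by lia.
have hk' : (INR k * INR 100 <= INR n * INR n * INR 36 + INR n * INR 1150)%R.
  have := le_INR _ _ (elimT ssrnat.leP hk2).
  by rewrite -!multE -!plusE !mult_INR !plus_INR !mult_INR.
have e100 : INR 100 = 100%R by rewrite INR_IZR_INZ.
have e36 : INR 36 = 36%R by rewrite INR_IZR_INZ.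
have e1150 : INR 1150 = 1150%R by rewrite INR_IZR_INZ.
rewrite e100 e36 e1150 in hk'.
have hn' : (1 <= INR n)%R.
  rewrite (_ : 1%R = INR 1) //; apply: le_INR; exact/ssrnat.leP.
apply Rle_trans with (INR (expn 2 k * sf P)%N).
  by apply: le_INR; apply/ssrnat.leP.
rewrite -multE mult_INR INR_expn2.
apply: Rmult_le_compat_r; first exact: pos_INR.
rewrite -(Rpower_pow k 2 Rlt_0_2).
apply: Rle_Rpower; first Stdlib.micromega.Lra.lra.
Stdlib.micromega.Lra.nra.
Qed.
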